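(* Let $G\cong G_1\odot G_2$ be a corona graph where $G_1$ has no isolated vertices, and let $w=(w_0,\dots,w_l)$ with $w_0$ a positive integer and $w_1,\dots,w_l$ nonnegative integers. If $l\ge w_0\ge w_1\ge\cdots\ge w_l$ and $|V(G_2)|\ge w_0$, then $\gamma_w(G)=w_0\gamma(G)$.
   Context: All graphs are finite and simple; $N(v)$ denotes the open neighbourhood of $v$. For a vector $w=(w_0,\dots,w_l)$ of nonnegative integers with $w_0\ge1$, a function $f:V(G)\to\{0,\dots,l\}$ is a $w$-dominating function if $\sum_{u\in N(v)}f(u)\ge w_i$ for every vertex $v$ with $f(v)=i$. The weight is $\omega(f)=\sum_v f(v)$, and $\gamma_w(G)$ is the minimum weight of a $w$-dominating function on $G$. $\gamma(G)$ is the domination number. The corona product $G_1\odot G_2$ is obtained from one copy of $G_1$ and $|V(G_1)|$ copies of $G_2$ by joining every vertex of the $i$-th copy of $G_2$ to the $i$-th vertex of $G_1$. *)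

(* Defs.v *)
From mathcomp Require Import all_boot all_order.
Set Implicit Arguments. Unset Strict Implicit. Unset Printing Implicit Defensive.

Definition simple_graph (V : finType) (e : rel V) : Prop :=
  symmetric e /\ irreflexive e.

(* Corona product G1 ⊙ G2: vertices of G1 (inl) and, for each vertex i of G1,
   a copy of G2 (inr (i, x)). *)
Definition corona_vertex (V1 V2 : finType) : finType := (V1 + (V1 * V2))%type.

Definition corona_rel (V1 V2 : finType) (e1 : rel V1) (e2 : rel V2)
  : rel (corona_vertex V1 V2) :=
  fun u v =>
    match u, v with
    | inl a, inl b => e1 a b
    | inr (i, x), inr (j, y) => (i == j) && e2 x y
    | inl a, inr (i, _) => a == i
    | inr (i, _), inl a => i == a
    end.

Definition graph_iso (T U : finType) (e : rel T) (e' : rel U) (phi : T -> U) : Prop :=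
  bijective phi /\ forall x y, e x y = e' (phi x) (phi y).

Definition dominating (V : finType) (e : rel V) (S : {set V}) : bool :=
  [forall v, (v \in S) || [exists u in S, e v u]].

(* V itself is dominating, so the default #|V| is never smaller than the min. *)
Definition domination_number (V : finType) (e : rel V) : nat :=
  \big[minn/#|V|]_(S : {set V} | dominating e S) #|S|.

(* w-dominating functions for w = (w_0, ..., w_l), w : {ffun 'I_l.+1 -> nat};
   a function f : V -> {0,...,l} is represented as {ffun V -> 'I_l.+1}. *)
Definition w_dominating (V : finType) (e : rel V) (l : nat)
  (w : {ffun 'I_l.+1 -> nat}) (f : {ffun V -> 'I_l.+1}) : bool :=
  [forall v, w (f v) <= \sum_(u | e v u) (f u : nat)].

Definition fweight (V : finType) (l : nat) (f : {ffun V -> 'I_l.+1}) : nat :=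
  \sum_v (f v : nat).

(* Minimum weight of a w-dominating function.  The default l * #|V| is the
   largest possible weight, so it never undercuts an actual minimum. *)
Definition gamma_w (V : finType) (e : rel V) (l : nat) (w : {ffun 'I_l.+1 -> nat}) : nat :=
  \big[minn/(l * #|V|)]_(f : {ffun V -> 'I_l.+1} | w_dominating e w f) fweight f.

(* Main.v *)
Require Import Defs.
From mathcomp Require Import all_boot all_order.
Set Implicit Arguments. Unset Strict Implicit. Unset Printing Implicit Defensive.

Section Helpers.
Variables (V1 V2 T : finType) (phi : T -> corona_vertex V1 V2)
  (psi : corona_vertex V1 V2 -> T).
Hypotheses (phiK : cancel phi psi) (psiK : cancel psi phi).

Lemma decomp (F : T -> nat) :
  \sum_t F t = \sum_a (F (psi (inl a)) + \sum_x F (psi (inr (a, x)))).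
Proof.
rewrite (reindex psi) /=; last by exists phi => c _; [rewrite psiK|rewrite phiK].
rewrite big_sumType /= big_split /=; congr (_ + _).
rewrite pair_big /=; apply: eq_bigr => -[a x] //.
Qed.

End Helpers.

Lemma bigmin_le (I : finType) (P : pred I) (F : I -> nat) d j :
  P j -> \big[minn/d]_(i | P i) F i <= F j.
Proof.
move=> Pj; rewrite unlock /=.
have : j \in index_enum I by rewrite mem_index_enum.
elim: (index_enum I) => //= x s IH; rewrite in_cons => /orP [/eqP <-|js].
  by rewrite Pj geq_minl.
case: (P x); last exact: IH.
by rewrite (leq_trans (geq_minr _ _)) // IH.
Qed.

Lemma bigmin_ge (I : finType) (P : pred I) (F : I -> nat) d K :
  K <= d -> (forall i, P i -> K <= F i) -> K <= \big[minn/d]_(i | P i) F i.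
Proof.
move=> Kd HF; apply: (big_ind (fun m => K <= m)) => //.
by move=> x y Hx Hy; rewrite leq_min Hx Hy.
Qed.

Theorem theorem7
  (V1 V2 T : finType) (e1 : rel V1) (e2 : rel V2) (e : rel T)
  (phi : T -> corona_vertex V1 V2)
  (l : nat) (w : {ffun 'I_l.+1 -> nat}) :
  simple_graph e1 -> simple_graph e2 -> simple_graph e ->
  graph_iso e (corona_rel e1 e2) phi ->
  (forall a : V1, exists b : V1, e1 a b) ->
  0 < w ord0 ->
  w ord0 <= l ->
  (forall i j : 'I_l.+1, i <= j -> w j <= w i) ->
  w ord0 <= #|V2| ->
  gamma_w e w = w ord0 * domination_number e.
Proof.
move=> _ _ _ [[psi phiK psiK] He] noiso w0pos w0l wmono w0V2.
have heq : forall c d, e (psi c) (psi d) = corona_rel e1 e2 c d.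
  by move=> c d; rewrite He !psiK.
have cardV1 : #|V1| = \sum_(a : V1) 1 by rewrite sum1_card.
have cardT : #|V1| <= #|T|.
  rewrite cardV1 -sum1_card (decomp phiK psiK (fun _ => 1)).
  by apply: leq_sum => a _; rewrite leq_addr.
have [x0 _] : exists x0 : V2, x0 \in V2.
  by apply/card_gt0P; apply: leq_trans w0pos w0V2.
have dn : domination_number e = #|V1|.
  apply/anti_leq/andP; split.
    set S0 := [set t | if phi t is inl _ then true else false].
    apply: (@leq_trans #|S0|).
      apply: bigmin_le.
      apply/forallP => v; case E: (phi v) => [a|[a x]].
        by rewrite inE E.
      apply/orP; right; apply/existsP; exists (psi (inl a)).
      by rewrite inE psiK He psiK E /=.
    rewrite -sum1_card big_mkcond /= (decomp phiK psiK) cardV1.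
    apply: leq_sum => a _; rewrite inE psiK big1 // => x _.
    by rewrite inE psiK.
  apply: bigmin_ge => // S domS.
  rewrite -sum1_card big_mkcond /= (decomp phiK psiK) cardV1.
  apply: leq_sum => a _.
  move/forallP: domS => /(_ (psi (inr (a, x0)))) /orP [inS | /existsP [u /andP [uS euv]]].
    by rewrite (bigD1 x0) //= inS addnCA leq_addr.
  rewrite He psiK in euv.
  case E: (phi u) euv => [b|[j y]] /=.
    by move/eqP=> ab; subst b; rewrite -E phiK uS.
  case/andP => /eqP ja _; subst j.
  by rewrite (bigD1 y) //= -E phiK uS addnCA leq_addr.
rewrite dn.
set w0 := w ord0.
apply/anti_leq/andP; split.
  pose f0 : {ffun T -> 'I_l.+1} :=
    [ffun t => if phi t is inl _ then inord w0 else ord0].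
  have w0K : (inord w0 : 'I_l.+1) = w0 :> nat by rewrite inordK // ltnS.
  apply: (@leq_trans (fweight f0)).
    apply: bigmin_le.
    apply/forallP => v; rewrite ffunE; case E: (phi v) => [a|[a x]].
      case: (noiso a) => b eab.
      apply: (@leq_trans w0); first by apply: wmono.
      rewrite (bigD1 (psi (inl b))) /=; last by rewrite He psiK E.
      by rewrite ffunE psiK w0K leq_addr.
    rewrite (bigD1 (psi (inl a))) /=; last by rewrite He psiK E /=.
    by rewrite ffunE psiK w0K leq_addr.
  rewrite /fweight (decomp phiK psiK).
  rewrite (eq_bigr (fun _ => w0)); last first.
    by move=> a _; rewrite ffunE psiK w0K big1 ?addn0 // => x _; rewrite ffunE psiK.
  by rewrite sum_nat_const mulnC.
apply: bigmin_ge => [|f wd]; first by rewrite leq_mul.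
rewrite /fweight (decomp phiK psiK) cardV1 big_distrr /=.
apply: leq_sum => a _; rewrite muln1.
case: (boolP [exists x, (f (psi (inr (a,x))) : nat) == 0]).
  case/existsP=> x /eqP fx0.
  move/forallP: wd => /(_ (psi (inr (a,x)))).
  have -> : f (psi (inr (a,x))) = ord0 by apply: val_inj.
  move=> H; apply: leq_trans H _.
  rewrite big_mkcond /= (decomp phiK psiK) (bigD1 a) //=.
  rewrite [X in _ + X <= _]big1 ?addn0; last first.
    move=> b; rewrite eq_sym => ba; rewrite heq /= (negbTE ba) add0n big1 // => y _.
    by rewrite heq /= (negbTE ba).
  apply: leq_add; first by case: ifP.
  by apply: leq_sum => y _; case: ifP.
rewrite negb_exists => /forallP H.
apply: leq_trans w0V2 _; apply: leq_trans (leq_addl _ _).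
rewrite -sum1_card; apply: leq_sum => x _; rewrite lt0n; exact: H.
Qed.
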